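(* Let $\delta$ be a diagonal section and let $C$ be any bivariate copula with $C(t,t)=\delta(t)$ for all $t\in[0,1]$. Then for every $x,y\in[0,1]$, $$C(x,y)\le \min\left\{x,\;y,\;\max\{x,y\}-\frac12\left(\widehat{\delta}(x)+\widehat{\delta}(y)+\mathrm{TV}_{\min\{x,y\}}^{\max\{x,y\}}(\widehat{\delta})\right)\right\}.$$
   Context: $\mathbb{I}=[0,1]$. A (bivariate) copula is a function $C\colon\mathbb{I}^2\to\mathbb{I}$ with $C(x,0)=C(0,y)=0$, $C(x,1)=x$, $C(1,y)=y$ for all $x,y$, and $C(b,d)+C(a,c)-C(b,c)-C(a,d)\ge 0$ for all $a\le b$, $c\le d$ in $\mathbb{I}$. A diagonal section is a function $\delta\colon\mathbb{I}\to\mathbb{I}$ with $\delta(x)\le x$ for all $x$, $0\le\delta(y)-\delta(x)\le 2(y-x)$ whenever $x\le y$, and $\delta(1)=1$ (equivalently, $\delta$ is the diagonal $t\mapsto C(t,t)$ of some copula). Write $\widehat{\delta}(x)=x-\delta(x)$. For $f\colon\mathbb{I}\to\mathbb{R}$ and $0\le x\le y\le1$, $\mathrm{TV}_x^y(f)=\sup\{\sum_{i=1}^n|f(x_i)-f(x_{i-1})|: x=x_0<x_1<\dots<x_n=y\}$ is the total variation of $f$ on $[x,y]$. *)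

(* Defs.v *)
From HB Require Import structures.
From mathcomp Require Import all_boot all_order all_algebra.
From mathcomp Require Import all_classical all_reals.
From mathcomp Require Export ereal numfun realfun.
Set Implicit Arguments. Unset Strict Implicit. Unset Printing Implicit Defensive.
Import Order.TTheory GRing.Theory Num.Theory.
Local Open Scope ring_scope.

Definition inI {R : realType} (x : R) : Prop := 0 <= x <= 1.

(* A bivariate copula, given as a function R -> R -> R; only its values on I^2 matter. *)
Definition is_copula {R : realType} (C : R -> R -> R) : Prop :=
  [/\ (forall x y, inI x -> inI y -> inI (C x y)),
      (forall x, inI x -> C x 0 = 0 /\ C 0 x = 0),
      (forall x, inI x -> C x 1 = x /\ C 1 x = x) &
      (forall a b c d, inI a -> inI b -> inI c -> inI d -> a <= b -> c <= d ->
         0 <= C b d + C a c - C b c - C a d)].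

Definition is_diagonal_section {R : realType} (d : R -> R) : Prop :=
  [/\ (forall x, inI x -> inI (d x)),
      (forall x, inI x -> d x <= x),
      (forall x y, inI x -> inI y -> x <= y -> 0 <= d y - d x <= 2 * (y - x)) &
      d 1 = 1].

Definition dhat {R : realType} (d : R -> R) : R -> R := fun x => x - d x.

(* Main.v *)
Require Import Defs.
From HB Require Import structures.
From mathcomp Require Import all_boot all_order all_algebra.
From mathcomp Require Import all_classical all_reals.
From mathcomp Require Import ereal numfun realfun.
From mathcomp Require Import ring lra.
Import Order.TTheory GRing.Theory Num.Theory.
Local Open Scope ring_scope.

Lemma copula_tr (R : realType) (C : R -> R -> R) :
  is_copula C -> is_copula (fun x y => C y x).
Proof.
case=> h1 h2 h3 h4; split.
- by move=> x y hx hy; apply: h1.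
- by move=> x hx; have [? ?] := h2 x hx; split.
- by move=> x hx; have [? ?] := h3 x hx; split.
- move=> a b c e ha hb hc he ab ce.
  have := h4 c e a b hc he ha hb ce ab; lra.
Qed.

Lemma core (R : realType) (d : R -> R) (C : R -> R -> R) :
  is_copula C -> (forall t, inI t -> C t t = d t) ->
  forall a b, inI a -> inI b -> a <= b ->
  (total_variation a b (dhat d) <=
     (2 * b - 2 * C a b - dhat d a - dhat d b)%:E)%E.
Proof.
case=> h1 h2 h3 h4 hd a b ha hb ab.
pose G t := 2 * t - 2 * C a t - dhat d a - dhat d t.
pose P t := (G t + dhat d t) / 2.
pose Q t := (G t - dhat d t) / 2.
have key : forall s t, a <= s -> s <= t -> t <= b ->
    `|dhat d t - dhat d s| <= G t - G s.
  move=> s t as_ st tb.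
  have i01 : forall z, a <= z -> z <= b -> inI z.
    move=> z az zb; move: ha hb; rewrite /inI => /andP[? ?] /andP[? ?].
    apply/andP; split; lra.
  have hs := i01 s as_ (le_trans st tb).
  have ht := i01 t (le_trans as_ st) tb.
  have i1 : inI (1 : R) by rewrite /inI; apply/andP; split; lra.
  have i0 : inI (0 : R) by rewrite /inI; apply/andP; split; lra.
  have a1 : a <= 1 by move: ha => /andP[].
  have s0 : 0 <= s by move: hs => /andP[].
  have f1 := h4 a 1 s t ha i1 hs ht a1 st.
  have f2 := h4 a t s t ha ht hs ht (le_trans as_ st) st.
  have f3 := h4 s t 0 s hs ht i0 hs st s0.
  have [_ e1] := h3 t ht. have [_ e2] := h3 s hs.
  have [e3 _] := h2 s hs. have [e4 _] := h2 t ht.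
  have e5 := hd t ht. have e6 := hd s hs.
  rewrite /G /dhat in f1 f2 f3 *.
  rewrite ler_norml; apply/andP; split; lra.
have Ga : G a = 0 by rewrite /G /dhat hd //; lra.
have eqf : dhat d = P \+ (\- Q).
  by apply/funext => t /=; rewrite /P /Q; field.
have Pnd : {in `[a, b] &, {homo P : n m / n <= m}}.
  move=> s t; rewrite !in_itv /= => /andP[as_ sb] /andP[at_ tb] st.
  have := key s t as_ st tb; rewrite ler_norml => /andP[k1 k2].
  rewrite /P; lra.
have Qnd : {in `[a, b] &, {homo Q : n m / n <= m}}.
  move=> s t; rewrite !in_itv /= => /andP[as_ sb] /andP[at_ tb] st.
  have := key s t as_ st tb; rewrite ler_norml => /andP[k1 k2].
  rewrite /Q; lra.
have -> : total_variation a b (dhat d) = total_variation a b (P \+ \- Q) by rewrite -eqf.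
apply: le_trans (total_variation_le _ _ ab) _.
rewrite total_variationN (nondecreasing_total_variation ab Pnd).
rewrite (nondecreasing_total_variation ab Qnd) -EFinD lee_fin.
rewrite /P /Q; move: Ga; rewrite /G. move=> Ga. lra.
Qed.

Theorem proposition3p1 (R : realType) (d : R -> R) (C : R -> R -> R) :
  is_diagonal_section d -> is_copula C ->
  (forall t, inI t -> C t t = d t) ->
  forall x y, inI x -> inI y ->
  ((C x y)%:E <= Order.min (Order.min x%:E y%:E)
     ((Order.max x y)%:E - (2^-1)%:E *
        ((dhat d x)%:E + (dhat d y)%:E +
         total_variation (Order.min x y) (Order.max x y) (dhat d))))%E.
Proof.
move=> hdiag hC hd x y hx hy.
have hC' := @copula_tr _ _ hC.
have hd' : forall t, inI t -> (fun x y => C y x) t t = d t by [].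
have [m1 m2] : C x y <= x /\ C x y <= y.
  case: hC => h1 h2 h3 h4.
  have i1 : inI (1 : R) by rewrite /inI; apply/andP; split; lra.
  have i0 : inI (0 : R) by rewrite /inI; apply/andP; split; lra.
  have f1 := h4 0 x y 1 i0 hx hy i1 (proj1 (andP hx)) (proj2 (andP hy)).
  have f2 := h4 x 1 0 y hx i1 i0 hy (proj2 (andP hx)) (proj1 (andP hy)).
  have [e1 e2] := h3 x hx. have [e3 e4] := h3 y hy.
  have [e5 e6] := h2 x hx. have [e7 e8] := h2 y hy.
  have [e9 e10] := h2 1 i1.
  split; lra.
have [TV [tvE tvb]] : exists tv : R,
    total_variation (Order.min x y) (Order.max x y) (dhat d) = tv%:E /\
    2 * Order.max x y - 2 * C x y - dhat d x - dhat d y - tv >= 0.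
  have [xy|yx] := leP x y.
  - have hb := @core _ _ _ hC hd _ _ hx hy xy.
    have h0 := total_variation_ge0 (dhat d) xy.
    move: hb h0.
    case: (total_variation x y (dhat d)) => [r| |] //= hb h0.
    exists r; split => //; move: hb; rewrite lee_fin; lra.
  - have yx' := ltW yx.
    have hb := @core _ _ _ hC' hd' _ _ hy hx yx'.
    have h0 := total_variation_ge0 (dhat d) yx'.
    move: hb h0 => /=.
    case: (total_variation y x (dhat d)) => [r| |] //= hb h0.
    exists r; split => //; move: hb; rewrite lee_fin; lra.
rewrite tvE -!EFinD -!EFin_min lee_fin !le_min.
rewrite m1 m2 /=.
move: tvb; move: (Order.max x y) (dhat d x) (dhat d y) (C x y) => M u v c; lra.
Qed.
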